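(* Let $\mathbf x=(k,S,\Lambda,\mathbf a)$ be an abelian group $k$-parameter and $G=G_{\mathbf x}$. If $U\subseteq{}^\omega S$ and $u\subseteq{}^\omega S\setminus U$ is finite, then $G_{U,u}\subseteq G_{U\cup u}$, and moreover $G_{U,u}$ is a pure subgroup of $G_{U\cup u}$ and $G_{U\cup u}$ is a pure subgroup of $G$.
   Context: For a set $S$, ${}^\omega S$ is the set of all functions $\omega\to S$. An abelian group $k$-parameter is $\mathbf x=(k,S,\Lambda,\mathbf a)$ with $k<\omega$, $S$ a set, $\Lambda\subseteq {}^{k+1}({}^\omega S)$ (sequences $\bar\eta=\langle\eta_0,\dots,\eta_k\rangle$, $\eta_\ell\in{}^\omega S$) and $\mathbf a:\Lambda\times\omega\to\mathbb Z$, $\mathbf a_{\bar\eta,n}=\mathbf a(\bar\eta,n)$. For $\bar\eta\in\Lambda$, $m\le k$, $n<\omega$, $\bar\eta\upharpoonleft\langle m,n\rangle$ is the sequence obtained from $\bar\eta$ by replacing $\eta_m$ with $\eta_m\restriction n$. $\Lambda_m=\{\bar\eta\upharpoonleft\langle m,n\rangle:\bar\eta\in\Lambda,n<\omega\}$, $\Lambda_{\le k}=\bigcup_{m\le k}\Lambda_m$. $G_{\mathbf x}$ is the abelian group generated by $z$, $x_{\bar\nu}$ ($\bar\nu\in\Lambda_{\le k}$), $y_{\bar\eta,n}$ ($\bar\eta\in\Lambda,n<\omega$) freely except for the relations $(n!)y_{\bar\eta,n+1}=y_{\bar\eta,n}+\mathbf a_{\bar\eta,n}z+\sum_{m\le k}x_{\bar\eta\upharpoonleft\langle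 m,n\rangle}$ ($\bar\eta\in\Lambda$, $n<\omega$). For $U\subseteq{}^\omega S$, $G_U$ is the subgroup of $G_{\mathbf x}$ generated by $\{z\}\cup\{y_{\bar\eta,n}:\bar\eta\in\Lambda\cap{}^{k+1}U,n<\omega\}\cup\{x_{\bar\eta\upharpoonleft\langle m,n\rangle}:\bar\eta\in\Lambda\cap{}^{k+1}U,m\le k,n<\omega\}$. For $U\subseteq{}^\omega S$ and finite $u\subseteq{}^\omega S$, $G_{U,u}$ is the subgroup of $G_{\mathbf x}$ generated by $\bigcup_{\eta\in u}G_{U\cup(u\setminus\{\eta\})}$ (so $G_{U,\emptyset}=\{0\}$). A subgroup $H\subseteq K$ is pure if $na\in H$, $a\in K$, $0\neq n\in\mathbb Z$ imply $a\in H$. *)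

(* Defs.v *)
From mathcomp Require Import all_boot all_algebra.
From Stdlib Require List.
From Stdlib Require Import ClassicalEpsilon.
Set Implicit Arguments. Unset Strict Implicit. Unset Printing Implicit Defensive.
Import GRing.Theory Num.Theory.
Local Open Scope ring_scope.

Section AbGroupParam.
Variables (k : nat) (S : Type).

Definition omseq := nat -> S.
Definition tup := 'I_k.+1 -> omseq.
(* elements of Lambda_{<=k}: tuples whose coordinates are either infinite
   sequences or finite sequences (eta restricted to n is  mkseq eta n). *)
Definition ptup := 'I_k.+1 -> (omseq + seq S)%type.

Definition restr (eta : tup) (m : 'I_k.+1) (n : nat) : ptup :=
  fun i => if i == m then inr (mkseq (eta i) n) else inl (eta i).

Inductive gen : Type :=
| Gz : gen
| Gx : ptup -> gen
| Gy : tup -> nat -> gen.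

(* elements of the free abelian group on gen: functions gen -> int
   (those actually arising are finitely supported, being Z-combinations
   of indicator functions) *)
Definition fgrp := gen -> int.

Definition ind (g : gen) : fgrp :=
  fun h => if excluded_middle_informative (h = g) then 1 else 0.

Definition fzero : fgrp := fun _ => 0.
Definition fsub (f g : fgrp) : fgrp := fun h => f h - g h.
Definition fscale (n : int) (f : fgrp) : fgrp := fun h => n * f h.

Inductive span (X : fgrp -> Prop) : fgrp -> Prop :=
| span0 : span X fzero
| span_in f : X f -> span X f
| span_sub f g : span X f -> span X g -> span X (fsub f g).

Variables (Lam : tup -> Prop) (a : tup -> nat -> int).

Definition is_gen (g : gen) : Prop :=
  g = Gz \/
  (exists eta m n, Lam eta /\ g = Gx (restr eta m n)) \/
  (exists eta n, Lam eta /\ g = Gy eta n).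

Definition relvec (eta : tup) (n : nat) : fgrp :=
  fun h => ((n`!)%:Z * ind (Gy eta n.+1) h - ind (Gy eta n) h
            - a eta n * ind Gz h
            - \sum_(m < k.+1) ind (Gx (restr eta m n)) h).

Definition is_rel (f : fgrp) : Prop :=
  exists eta n, Lam eta /\ f = relvec eta n.

(* the relation subgroup R; G_x = F / R *)
Definition Rel : fgrp -> Prop := span is_rel.

(* Subgroups of G_x are represented by their preimage in the free group:
   gsub X is the (preimage of the) subgroup of G_x generated by the images
   of the elements of X. *)
Definition gsub (X : fgrp -> Prop) (f : fgrp) : Prop :=
  exists h, span X h /\ Rel (fsub f h).

Definition Gfull : fgrp -> Prop :=
  gsub (fun f => exists g, is_gen g /\ f = ind g).

Definition genU (U : omseq -> Prop) (g : gen) : Prop :=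
  g = Gz \/
  (exists eta m n, Lam eta /\ (forall i, U (eta i)) /\ g = Gx (restr eta m n)) \/
  (exists eta n, Lam eta /\ (forall i, U (eta i)) /\ g = Gy eta n).

Definition GU (U : omseq -> Prop) : fgrp -> Prop :=
  gsub (fun f => exists g, genU U g /\ f = ind g).

Definition GUu (U : omseq -> Prop) (u : list omseq) : fgrp -> Prop :=
  gsub (fun f => exists eta, List.In eta u /\
          GU (fun xi => U xi \/ (List.In xi u /\ xi <> eta)) f).

Definition subgrp (H K : fgrp -> Prop) : Prop := forall f, H f -> K f.

Definition pure (H K : fgrp -> Prop) : Prop :=
  forall f, K f -> forall n : int, n != 0 -> H (fscale n f) -> H f.

End AbGroupParam.

(* Main.v *)
From Pilot Require Import Defs.
From mathcomp Require Import all_boot all_algebra.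
From mathcomp Require Import ring.
From Stdlib Require List.
From Stdlib Require Import ClassicalEpsilon FunctionalExtensionality.
Import Pilot.Defs.
Set Implicit Arguments. Unset Strict Implicit. Unset Printing Implicit Defensive.
Import GRing.Theory Num.Theory.
Local Open Scope ring_scope.

Section Aux.
Variables (k : nat) (S : Type).
Local Notation gen := (gen k S).
Local Notation fgrp := (fgrp k S).

Definition lsum (F : gen -> fgrp) (l : seq (int * gen)) : fgrp :=
  fun h => \sum_(p <- l) p.1 * F p.2 h.

Fixpoint allg (P : gen -> Prop) (l : seq (int * gen)) : Prop :=
  match l with [::] => True | p :: l' => P p.2 /\ allg P l' end.

Definition genset (P : gen -> Prop) : fgrp -> Prop :=
  fun f => exists g, P g /\ f = ind g.

Definition sc (c : int) (l : seq (int * gen)) := map (fun p => (c * p.1, p.2)) l.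

Lemma lsum_nil F h : lsum F [::] h = 0.
Proof. by rewrite /lsum big_nil. Qed.
Lemma lsum_cons F c g l h : lsum F ((c, g) :: l) h = c * F g h + lsum F l h.
Proof. by rewrite /lsum big_cons. Qed.
Lemma lsum_cat F l1 l2 h : lsum F (l1 ++ l2) h = lsum F l1 h + lsum F l2 h.
Proof. by rewrite /lsum big_cat. Qed.
Lemma lsum_sc F c l h : lsum F (sc c l) h = c * lsum F l h.
Proof.
rewrite /lsum /sc big_map mulr_sumr; apply: eq_bigr => p _ /=; by rewrite mulrA.
Qed.

Lemma ind_eq (g : gen) : ind g g = 1.
Proof. by rewrite /ind; case: excluded_middle_informative. Qed.
Lemma ind_neq (g h : gen) : h <> g -> ind g h = 0.
Proof. by rewrite /ind; case: excluded_middle_informative. Qed.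

Lemma allg_cat P l1 l2 : allg P l1 -> allg P l2 -> allg P (l1 ++ l2).
Proof. by elim: l1 => //= p l IH [H1 H2] H3; split => //; apply: IH. Qed.
Lemma allg_sc P c l : allg P l -> allg P (sc c l).
Proof. by elim: l => //= p l IH [H1 H2]; split => //; apply: IH. Qed.
Lemma allg_mono (P Q : gen -> Prop) l : (forall g, P g -> Q g) -> allg P l -> allg Q l.
Proof. by move=> PQ; elim: l => //= p l IH [H1 H2]; split; [apply: PQ|apply: IH]. Qed.

Definition eqg (g : gen) (p : int * gen) : bool :=
  if excluded_middle_informative (p.2 = g) then true else false.

Lemma lsum_zero n (l : seq (int * gen)) : (size l <= n)%N ->
  (forall h, lsum (@ind k S) l h = 0) -> forall F h, lsum F l h = 0.
Proof.
elim: n l => [|n IH] [|[c g] l] //= Hs H0 F h; try by rewrite lsum_nil.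
have dec : forall (G : gen -> fgrp) x, lsum G ((c, g) :: l) x =
   (c + \sum_(p <- l | eqg g p) p.1) * G g x + lsum G (filter (predC (eqg g)) l) x.
  move=> G x; rewrite lsum_cons /lsum big_filter (bigID (eqg g)) /= addrA mulrDl.
  congr (_ + _ + _); rewrite mulr_suml; apply: eq_bigr => p.
  by rewrite /eqg; case: excluded_middle_informative => // pe _; rewrite pe.
have s0 : c + \sum_(p <- l | eqg g p) p.1 = 0.
  have := H0 g; rewrite dec ind_eq mulr1 /lsum big_filter.
  rewrite [X in _ + X]big1 ?addr0 // => p.
  rewrite /eqg /=; case: excluded_middle_informative => // ne _.
  by rewrite ind_neq ?mulr0 // => e; apply: ne.
have H2 : forall x, lsum (@ind k S) (filter (predC (eqg g)) l) x = 0.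
  by move=> x; have := H0 x; rewrite dec s0 mul0r add0r.
rewrite dec s0 mul0r add0r; apply: IH => //.
by rewrite size_filter (leq_trans (count_size _ _)).
Qed.

Lemma lsum_wd (l1 l2 : seq (int * gen)) :
  (forall h, lsum (@ind k S) l1 h = lsum (@ind k S) l2 h) ->
  forall F h, lsum F l1 h = lsum F l2 h.
Proof.
move=> E F h; apply/eqP; rewrite -subr_eq0; apply/eqP.
have := @lsum_zero (size (l1 ++ sc (-1) l2)) (l1 ++ sc (-1) l2) (leqnn _).
move=> /(_ _ F h); rewrite lsum_cat lsum_sc mulN1r; apply => x.
by rewrite lsum_cat lsum_sc mulN1r E subrr.
Qed.

Lemma lsum_nz P l x : allg P l -> lsum (@ind k S) l x <> 0 -> P x.
Proof.
elim: l => [|[c g] l IH] /=; first by rewrite lsum_nil.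
move=> [Pg Al]; rewrite lsum_cons.
case: (excluded_middle_informative (x = g)) => [-> //|ne].
by rewrite ind_neq // mulr0 add0r; apply: IH.
Qed.

Lemma span_ext X (f g : fgrp) : span X f -> (forall h, f h = g h) -> span X g.
Proof. by move=> sf E; rewrite -(functional_extensionality f g E). Qed.

Lemma span_add X (f g : fgrp) : span X f -> span X g -> span X (fun h => f h + g h).
Proof.
move=> sf sg; apply: span_ext (span_sub sf (span_sub (span0 X) sg)) _ => h.
by rewrite /fsub /fzero sub0r opprK.
Qed.

Lemma span_scale X (f : fgrp) c : span X f -> span X (fun h => c * f h).
Proof.
move=> sf.
have Hn : forall n : nat, span X (fun h => n%:Z * f h).
  elim=> [|n IH]; first by apply: span_ext (span0 X) _ => h; rewrite mul0r.
  by apply: span_ext (span_add IH sf) _ => h; rewrite -[in RHS](addn1 n) PoszD mulrDl mul1r.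
case: c => n; first exact: Hn.
apply: span_ext (span_sub (span0 X) (Hn n.+1)) _ => h.
by rewrite /fsub /fzero NegzE sub0r mulNr.
Qed.

Lemma span_mono (X Y : fgrp -> Prop) f : (forall g, X g -> Y g) -> span X f -> span Y f.
Proof.
move=> XY; elim=> [|g Xg|g1 g2 _ IH1 _ IH2].
- exact: span0.
- by apply: span_in; apply: XY.
- exact: span_sub IH1 IH2.
Qed.

Lemma list_span P l f : allg P l -> (forall h, f h = lsum (@ind k S) l h) -> span (genset P) f.
Proof.
elim: l f => [|[c g] l IH] f /= Al E.
  by apply: span_ext (span0 _) _ => h; rewrite E lsum_nil.
case: Al => Pg Al.
apply: span_ext (span_add (span_scale c (span_in (X := genset P) (f := ind g) _))
                   (IH (lsum (@ind k S) l) Al (fun _ => erefl))) _.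
  by exists g.
by move=> h; rewrite E lsum_cons.
Qed.

Lemma span_list P f : span (genset P) f ->
  exists l, allg P l /\ forall h, f h = lsum (@ind k S) l h.
Proof.
elim=> [|g [g0 [Pg ->]]|f1 f2 _ [l1 [A1 E1]] _ [l2 [A2 E2]]].
- by exists [::]; split => // h; rewrite lsum_nil.
- by exists [:: (1, g0)]; split => // h; rewrite lsum_cons lsum_nil mul1r addr0.
- exists (l1 ++ sc (-1) l2); split; first by apply: allg_cat => //; apply: allg_sc.
  by move=> h; rewrite lsum_cat lsum_sc /fsub E1 E2 mulN1r.
Qed.

Lemma lsum_span X F l : allg (fun g => span X (F g)) l -> span X (lsum F l).
Proof.
elim: l => [|[c g] l IH] /=.
  by move=> _; apply: span_ext (span0 _) _ => h; rewrite lsum_nil.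
move=> [H1 H2]; apply: span_ext (span_add (span_scale c H1) (IH H2)) _ => h.
by rewrite lsum_cons.
Qed.

Lemma support P (f : fgrp) l : (forall h, f h = lsum (@ind k S) l h) ->
  (forall h, f h <> 0 -> P h) -> span (genset P) f.
Proof.
move=> E Sp.
pose e := fun p : int * gen => if excluded_middle_informative (P p.2) then true else false.
apply: (@list_span P (filter e l)).
  elim: l {E} => //= p l IH; rewrite /e; case: excluded_middle_informative => //= Pp.
move=> h; rewrite E /lsum big_filter (bigID e) /=.
suff -> : \sum_(i <- l | ~~ e i) i.1 * ind i.2 h = 0 by rewrite addr0.
case: (excluded_middle_informative (P h)) => Ph.
  rewrite big1 // => p; rewrite /e; case: excluded_middle_informative => // nP _.
  by rewrite ind_neq ?mulr0 // => eh; apply: nP; rewrite -eh.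
have f0 : f h = 0 by case: (excluded_middle_informative (f h = 0)) => // /Sp.
have s1 : \sum_(i <- l | e i) i.1 * ind i.2 h = 0.
  rewrite big1 // => p; rewrite /e; case: excluded_middle_informative => // Pp _.
  by rewrite ind_neq ?mulr0 // => eh; apply: Ph; rewrite eh.
by move: f0; rewrite E /lsum (bigID e) /= s1 add0r.
Qed.

End Aux.

Section Main.
Variables (k : nat) (S : Type) (Lam : tup k S -> Prop) (a : tup k S -> nat -> int).
Local Notation gen := (gen k S).
Local Notation fgrp := (fgrp k S).
Local Notation ind := (@ind k S).
Local Notation Rel := (Rel Lam a).

Definition lrest (eta : tup k S) (n : nat) : seq (int * gen) :=
  (- a eta n, Gz k S) :: map (fun m => (-1, Gx (restr eta m n))) (index_enum 'I_k.+1).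
Definition lrel eta n : seq (int * gen) :=
  ((n`!)%:Z, Gy eta n.+1) :: (-1, Gy eta n) :: lrest eta n.

Fixpoint ry (d : nat) (eta : tup k S) (n : nat) : fgrp :=
  match d with
  | 0 => ind (Gy eta n)
  | d'.+1 => fun h => (n`!)%:Z * ry d' eta n.+1 h + lsum ind (lrest eta n) h
  end.
Definition RN (N : nat) (g : gen) : fgrp :=
  match g with Gy eta n => ry (N - n)%N eta n | _ => ind g end.

Lemma sumN1 (G : 'I_k.+1 -> gen) h :
  lsum ind (map (fun m => (-1, G m)) (index_enum 'I_k.+1)) h = - \sum_(m < k.+1) ind (G m) h.
Proof. rewrite /lsum big_map -sumrN; apply: eq_bigr => m _ /=; exact: mulN1r. Qed.

Lemma relvecE eta n h : relvec a eta n h = lsum ind (lrel eta n) h.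
Proof.
rewrite /relvec /lrel !lsum_cons /lrest ?lsum_cons (sumN1 (fun m => Gx (restr eta m n))).
ring.
Qed.

Lemma lrest_RN N eta n h : lsum (RN N) (lrest eta n) h = lsum ind (lrest eta n) h.
Proof. by rewrite /lrest !lsum_cons /lsum !big_map. Qed.

Lemma relkill N eta n h : (n < N)%N -> lsum (RN N) (lrel eta n) h = 0.
Proof.
move=> lt; rewrite /lrel lsum_cons lsum_cons lrest_RN /= -(subnSK lt) /=; ring.
Qed.

Lemma rel_list r : Rel r -> exists B lr, (forall h, r h = lsum ind lr h) /\
  forall N, (B <= N)%N -> forall h, lsum (RN N) lr h = 0.
Proof.
elim=> [|f [eta [n [_ ->]]]|f1 f2 _ [B1 [l1 [E1 K1]]] _ [B2 [l2 [E2 K2]]]].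
- by exists 0%N, [::]; split => *; rewrite lsum_nil.
- exists n.+1, (lrel eta n); split; first exact: relvecE.
  by move=> N le h; apply: relkill.
- exists (maxn B1 B2), (l1 ++ sc (-1) l2); split.
    by move=> h; rewrite lsum_cat lsum_sc /fsub E1 E2 mulN1r.
  move=> N le h; rewrite lsum_cat lsum_sc K1 ?K2 ?mulr0 ?addr0 //.
    exact: leq_trans (leq_maxr _ _) le.
  exact: leq_trans (leq_maxl _ _) le.
Qed.

Lemma ry_span P eta : P (Gz k S) -> (forall m j, P (Gx (restr eta m j))) ->
  (forall j, P (Gy eta j)) -> forall d n, span (genset P) (ry d eta n).
Proof.
move=> Pz Px Py; elim=> [|d IH] n /=.
  by apply: span_in; exists (Gy eta n).
apply: span_add (span_scale _ (IH _)) (list_span (l := lrest eta n) _ (fun _ => erefl)).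
split => //; elim: (index_enum _) => //= m s IHs; split => //.
Qed.

Lemma ry_rel eta : Lam eta -> forall d n, Rel (fun h => ind (Gy eta n) h - ry d eta n h).
Proof.
move=> Le; elim=> [|d IH] n /=.
  by apply: span_ext (span0 _) _ => h; rewrite subrr.
have ir : is_rel Lam a (relvec a eta n) by exists eta, n.
apply: span_ext (span_sub (span_scale (n`!)%:Z (IH n.+1)) (span_in ir)) _ => h.
rewrite /fsub relvecE /lrel !lsum_cons; ring.
Qed.

Lemma gen_rel N g : is_gen Lam g -> Rel (fun h => ind g h - RN N g h).
Proof.
move=> [->|[[eta [m [n [_ ->]]]]|[eta [n [Le ->]]]]] /=; last exact: ry_rel.
  by apply: span_ext (span0 _) _ => h; rewrite subrr.
by apply: span_ext (span0 _) _ => h; rewrite subrr.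
Qed.

Lemma lsum_rel F l : allg (fun g => Rel (fun h => ind g h - F g h)) l ->
  Rel (fun h => lsum ind l h - lsum F l h).
Proof.
elim: l => [|[c g] l IH] /=.
  by move=> _; apply: span_ext (span0 _) _ => h; rewrite !lsum_nil subrr.
move=> [H1 H2]; apply: span_ext (span_add (span_scale c H1) (IH H2)) _ => h.
rewrite !lsum_cons; ring.
Qed.

Lemma core (P : gen -> Prop) (HC : forall N g, P g -> span (genset P) (RN N g))
  f (n : int) : Gfull Lam a f -> n != 0 ->
  gsub Lam a (genset P) (fscale n f) -> gsub Lam a (genset P) f.
Proof.
move=> [h [sh rh]] nz [h' [sh' rh']].
have [lh [alh eh]] := span_list sh.
have [lh' [alh' eh']] := span_list sh'.
have [B1 [lr1 [er1 kr1]]] := rel_list rh.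
have [B2 [lr2 [er2 kr2]]] := rel_list rh'.
pose N := maxn B1 B2.
pose g := lsum (RN N) lh.
have key : forall x, n * g x = lsum (RN N) lh' x.
  move=> x.
  have := @lsum_wd _ _ (sc n (lh ++ lr1)) (lh' ++ lr2) _ (RN N) x.
  rewrite lsum_sc !lsum_cat kr1 ?kr2 ?addr0 ?leq_maxr ?leq_maxl //.
  apply; move=> y; rewrite lsum_sc !lsum_cat -eh -eh' -er1 -er2 /fsub /fscale.
  ring.
exists g; split.
  have sg : span (genset (fun _ => True)) g.
    apply: lsum_span; apply: allg_mono alh => x _.
    case: x => [|nu|eta j] /=; try by apply: span_in; eexists.
    by apply: ry_span.
  have [l4 [_ e4]] := span_list sg.
  have sl : span (genset P) (lsum (RN N) lh').
    by apply: lsum_span; apply: allg_mono alh' => x Px; apply: HC.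
  have [l3 [al3 e3]] := span_list sl.
  apply: (support e4) => x gx.
  apply: (lsum_nz al3); rewrite -e3 -key.
  by apply/eqP; rewrite mulf_neq0 //; apply/eqP.
have := lsum_rel (F := RN N) (allg_mono (fun x (Gx : is_gen Lam x) => gen_rel N Gx) alh).
move=> /(span_add rh) H; apply: (span_ext H) => x.
by rewrite /fsub eh /g; ring.
Qed.

End Main.

Section Final.
Variables (k : nat) (S : Type) (Lam : tup k S -> Prop) (a : tup k S -> nat -> int).
Local Notation fgrp := (fgrp k S).

Lemma rel0 (f : fgrp) : Rel Lam a (fsub f f).
Proof. by apply: span_ext (span0 _) _ => x; rewrite /fsub subrr. Qed.

Lemma gsub_closure (X Y : fgrp -> Prop) f :
  (forall g, X g -> gsub Lam a Y g) -> gsub Lam a X f -> gsub Lam a Y f.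
Proof.
move=> XY [h [sh rh]].
have : gsub Lam a Y h.
  elim: sh {rh} => [|g Xg|g1 g2 _ [h1 [s1 r1]] _ [h2 [s2 r2]]].
  - exists (@fzero k S); split; first exact: span0.
    by apply: span_ext (span0 _) _ => x; rewrite /fsub subrr.
  - exact: XY.
  - exists (fsub h1 h2); split; first exact: span_sub.
    by apply: span_ext (span_sub r1 r2) _ => x; rewrite /fsub; ring.
move=> [h' [sh' rh']]; exists h'; split => //.
by apply: span_ext (span_add rh rh') _ => x; rewrite /fsub; ring.
Qed.

Lemma gsub_mono (P Q : gen k S -> Prop) f : (forall g, P g -> Q g) ->
  gsub Lam a (genset P) f -> gsub Lam a (genset Q) f.
Proof.
move=> PQ; apply: gsub_closure => g [x [Px ->]].
exists (ind x); split; last exact: rel0.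
by apply: span_in; exists x; split => //; apply: PQ.
Qed.

Lemma genU_mono (V W : omseq S -> Prop) g : (forall xi, V xi -> W xi) ->
  genU Lam V g -> genU Lam W g.
Proof.
move=> VW [->|[[eta [m [n [Le [HV ->]]]]]|[eta [n [Le [HV ->]]]]]].
- by left.
- by right; left; exists eta, m, n; split => //; split => // i; apply: VW.
- by right; right; exists eta, n; split => //; split => // i; apply: VW.
Qed.

Lemma genU_gen V g : genU Lam V g -> is_gen Lam g.
Proof.
move=> [->|[[eta [m [n [Le [HV ->]]]]]|[eta [n [Le [HV ->]]]]]].
- by left.
- by right; left; exists eta, m, n.
- by right; right; exists eta, n.
Qed.

Lemma HC_genU V N g : genU Lam V g -> span (genset (genU Lam V)) (RN a N g).
Proof.
move=> Hg; case: (Hg) => [->|[[eta [m [n [Le [HV ->]]]]]|[eta [n [Le [HV ->]]]]]] /=.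
- by apply: span_in; exists (Gz k S); split => //; left.
- apply: span_in; exists (Gx (restr eta m n)); split; last by []. by right; left; exists eta, m, n.
- apply: ry_span => [|m j|j]; first by left.
  + by right; left; exists eta, m, j.
  + by right; right; exists eta, j.
Qed.

End Final.

Theorem claim1p10 (k : nat) (S : Type) (Lam : tup k S -> Prop)
  (a : tup k S -> nat -> int)
  (U : omseq S -> Prop) (u : list (omseq S))
  (hu : forall eta, List.In eta u -> ~ U eta) :
  let UUu := fun xi => U xi \/ List.In xi u in
  subgrp (GUu Lam a U u) (GU Lam a UUu) /\
  pure (GUu Lam a U u) (GU Lam a UUu) /\
  pure (GU Lam a UUu) (Gfull Lam a).
Proof.
move=> UUu.
pose V e := fun xi => U xi \/ (List.In xi u /\ xi <> e).
pose PH g := exists e, List.In e u /\ genU Lam (V e) g.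
have E1 : forall f, GUu Lam a U u f -> gsub Lam a (genset PH) f.
  move=> f; apply: gsub_closure => g [e [ine Hg]].
  by apply: gsub_mono Hg => x Hx; exists e.
have E2 : forall f, gsub Lam a (genset PH) f -> GUu Lam a U u f.
  move=> f; apply: gsub_closure => g [x [[e [ine Hx]] ->]].
  exists (ind x); split; last exact: rel0.
  apply: span_in; exists e; split => //.
  exists (ind x); split; last exact: rel0.
  by apply: span_in; exists x.
have GUfull : forall f, GU Lam a UUu f -> Gfull Lam a f.
  by move=> f; apply: gsub_mono; apply: genU_gen.
split; [|split].
- move=> f /E1; apply: gsub_mono => x [e [ine Hx]].
  by apply: genU_mono Hx => xi [Uxi|[ini _]]; [left|right].
- move=> f Kf n nz /E1 H; apply: E2; apply: core (GUfull _ Kf) nz H.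
  move=> N g [e [ine Hg]]; apply: (span_mono _ (HC_genU a N Hg)) => y [x [Hx ->]].
  by exists x; split => //; exists e.
- move=> f Kf n nz H; apply: core Kf nz H => N g; exact: HC_genU.
Qed.
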